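(* Let $X$ be a real Hilbert space, let $\alpha\in\mathbb{R}\setminus\{0\}$ and $\beta>0$, equip $X\times X\times\mathbb{R}$ with the norm $\|(u,v,\gamma)\|=\sqrt{\|u\|^2+\|v\|^2+\beta^2|\gamma|^2}$, and let $$\widetilde{C}_\alpha=\{(u,v,\gamma)\in X\times X\times\mathbb{R} : \|u\|^2-\|v\|^2=2\alpha\gamma\}.$$ Let $(u_0,v_0,\gamma_0)\in X\times X\times\mathbb{R}$. Then the following hold. (i) If $u_0\neq 0$ and $v_0\neq 0$, then $$P_{\widetilde{C}_\alpha}(u_0,v_0,\gamma_0)=\Big\{\Big(\frac{u_0}{1+\lambda},\frac{v_0}{1-\lambda},\gamma_0+\frac{\lambda\alpha}{\beta^2}\Big)\Big\},$$ where $\lambda$ is the unique solution in $]-1,1[$ of $$g(\lambda):=\frac{(\lambda^2+1)p-2\lambda q}{(1-\lambda^2)^2}-\frac{2\lambda\alpha^2}{\beta^2}-2\alpha\gamma_0=0,$$ with $p:=\|u_0\|^2-\|v_0\|^2$ and $q:=\|u_0\|^2+\|v_0\|^2$. (ii) If $u_0=0$ and $v_0\neq 0$: (a) if $\alpha(\gamma_0-\frac{\alpha}{\beta^2})<-\frac{\|v_0\|^2}{8}$, then $P_{\widetilde{C}_\alpha}(0,v_0,\gamma_0)=\{(0,\frac{v_0}{1-\lambda},\gamma_0+\frac{\lambda\alpha}{\beta^2})\}$ for the unique $\lambda\in]-1,1[$ solving $g_1(\lambda):=\frac{\|v_0\|^2}{(1-\lambda)^2}+\frac{2\lambda\alpha^2}{\beta^2}+2\alpha\gamma_0=0$;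 (b) if $\alpha(\gamma_0-\frac{\alpha}{\beta^2})\geq-\frac{\|v_0\|^2}{8}$, then $$P_{\widetilde{C}_\alpha}(0,v_0,\gamma_0)=\Big\{\Big(u,\frac{v_0}{2},\gamma_0-\frac{\alpha}{\beta^2}\Big): u\in X,\ \|u\|=\sqrt{2\alpha\big(\gamma_0-\tfrac{\alpha}{\beta^2}\big)+\tfrac{\|v_0\|^2}{4}}\Big\},$$ which is a singleton if and only if $\alpha(\gamma_0-\frac{\alpha}{\beta^2})=-\frac{\|v_0\|^2}{8}$. (iii) If $u_0\neq 0$ and $v_0=0$: (a) if $\alpha(\gamma_0+\frac{\alpha}{\beta^2})>\frac{\|u_0\|^2}{8}$, then $P_{\widetilde{C}_\alpha}(u_0,0,\gamma_0)=\{(\frac{u_0}{1+\lambda},0,\gamma_0+\frac{\lambda\alpha}{\beta^2})\}$ for the unique $\lambda\in]-1,1[$ solving $g_2(\lambda):=\frac{\|u_0\|^2}{(1+\lambda)^2}-\frac{2\lambda\alpha^2}{\beta^2}-2\alpha\gamma_0=0$; (b) if $\alpha(\gamma_0+\frac{\alpha}{\beta^2})\leq\frac{\|u_0\|^2}{8}$, then $$P_{\widetilde{C}_\alpha}(u_0,0,\gamma_0)=\Big\{\Big(\frac{u_0}{2},v,\gamma_0+\frac{\alpha}{\beta^2}\Big): v\in X,\ \|v\|=\sqrt{-2\alpha\big(\gamma_0+\tfrac{\alpha}{\beta^2}\big)+\tfrac{\|u_0\|^2}{4}}\Big\},$$ which is a singleton if and only if $\alpha(\gamma_0+\frac{\alpha}{\beta^2})=\frac{\|u_0\|^2}{8}$.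 (iv) If $u_0=0$ and $v_0=0$: (a) if $\alpha\gamma_0>\frac{\alpha^2}{\beta^2}$, then $P_{\widetilde{C}_\alpha}(0,0,\gamma_0)$ is the non-singleton set $\{(u,0,\gamma_0-\frac{\alpha}{\beta^2}): u\in X,\ \|u\|=\sqrt{2\alpha(\gamma_0-\frac{\alpha}{\beta^2})}\}$; (b) if $|\alpha\gamma_0|\leq\frac{\alpha^2}{\beta^2}$, then $P_{\widetilde{C}_\alpha}(0,0,\gamma_0)=\{(0,0,0)\}$; (c) if $\alpha\gamma_0<-\frac{\alpha^2}{\beta^2}$, then $P_{\widetilde{C}_\alpha}(0,0,\gamma_0)$ is the non-singleton set $\{(0,v,\gamma_0+\frac{\alpha}{\beta^2}): v\in X,\ \|v\|=\sqrt{-2\alpha(\gamma_0+\frac{\alpha}{\beta^2})}\}$.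
   Context: For a nonempty set $S\subseteq X\times X\times\mathbb{R}$, the projection $P_S(z)$ is the (possibly empty or multi-valued) set $\operatorname{argmin}_{w\in S}\|w-z\|$, where the norm is the $\beta$-weighted norm $\|(u,v,\gamma)\|=\sqrt{\|u\|^2+\|v\|^2+\beta^2|\gamma|^2}$. *)

(* Defs.v *)
From HB Require Import structures.
From mathcomp Require Import all_boot all_order all_algebra.
From mathcomp Require Import all_classical all_reals all_analysis.
Set Implicit Arguments. Unset Strict Implicit. Unset Printing Implicit Defensive.
Import Order.TTheory GRing.Theory Num.Theory.
Import numFieldNormedType.Exports.
Local Open Scope classical_set_scope.
Local Open Scope ring_scope.

(* A real Hilbert space is modelled as a complete normed module X over a
   realType R together with an inner product ip inducing the norm. *)
Definition is_inner_product (R : realType) (X : normedModType R)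
  (ip : X -> X -> R) : Prop :=
  [/\ (forall x y, ip x y = ip y x),
      (forall (a : R) (x y z : X), ip (a *: x + y) z = a * ip x z + ip y z) &
      (forall x, ip x x = `|x| ^+ 2)].

Definition wnorm (R : realType) (X : normedModType R) (beta : R)
  (w : X * X * R) : R :=
  Num.sqrt (`|w.1.1| ^+ 2 + `|w.1.2| ^+ 2 + beta ^+ 2 * `|w.2| ^+ 2).

Definition wdist (R : realType) (X : normedModType R) (beta : R)
  (w z : X * X * R) : R :=
  wnorm beta (w.1.1 - z.1.1, w.1.2 - z.1.2, w.2 - z.2).

Definition Ctilde (R : realType) (X : normedModType R) (alpha : R)
  : set (X * X * R) :=
  [set w | `|w.1.1| ^+ 2 - `|w.1.2| ^+ 2 = 2 * alpha * w.2].

Definition wproj (R : realType) (X : normedModType R) (beta : R)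
  (S : set (X * X * R)) (z : X * X * R) : set (X * X * R) :=
  [set w | S w /\ forall w', S w' -> wdist beta w z <= wdist beta w' z].

Definition is_singleton (T : Type) (A : set T) : Prop := exists a, A = [set a].

Definition gfun (R : realType) (alpha beta gamma0 p q : R) (l : R) : R :=
  ((l ^+ 2 + 1) * p - 2 * l * q) / (1 - l ^+ 2) ^+ 2
  - 2 * l * alpha ^+ 2 / beta ^+ 2 - 2 * alpha * gamma0.

Definition g1fun (R : realType) (alpha beta gamma0 nv2 : R) (l : R) : R :=
  nv2 / (1 - l) ^+ 2 + 2 * l * alpha ^+ 2 / beta ^+ 2 + 2 * alpha * gamma0.

Definition g2fun (R : realType) (alpha beta gamma0 nu2 : R) (l : R) : R :=
  nu2 / (1 + l) ^+ 2 - 2 * l * alpha ^+ 2 / beta ^+ 2 - 2 * alpha * gamma0.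

(* Main.v *)
Require Import Defs.
From HB Require Import structures.
From mathcomp Require Import all_boot all_order all_algebra.
From mathcomp Require Import all_classical all_reals all_analysis.
Import Order.TTheory GRing.Theory Num.Theory.
Import numFieldNormedType.Exports.
Local Open Scope classical_set_scope.
Local Open Scope ring_scope.

From mathcomp Require Import ring lra.
Section Aux.
Variables (R : realType) (X : normedModType R) (ip : X -> X -> R).
Hypothesis hip : is_inner_product ip.

Lemma ipD x y z : ip (x + y) z = ip x z + ip y z.
Proof. by case: hip => _ h _; rewrite -[x]scale1r h mul1r scale1r. Qed.
Lemma ip0 z : ip 0 z = 0.
Proof. have h := ipD 0 0 z; rewrite addr0 in h; lra. Qed.
Lemma ipZ a x z : ip (a *: x) z = a * ip x z.
Proof. by case: hip => _ h _; rewrite -[a *: x]addr0 h ip0 addr0. Qed.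
Lemma ipC x y : ip x y = ip y x.
Proof. by case: hip. Qed.
Lemma ipxx x : ip x x = `|x| ^+ 2.
Proof. by case: hip. Qed.
Lemma ipB x y z : ip (x - y) z = ip x z - ip y z.
Proof. by rewrite ipD -scaleN1r ipZ mulN1r. Qed.

Lemma sq_sub x y : `|x - y| ^+ 2 = `|x| ^+ 2 - 2 * ip x y + `|y| ^+ 2.
Proof.
rewrite -!ipxx ipB ![ip _ (x - y)]ipC !ipB (ipC y x); ring.
Qed.

Lemma sqZ (a : R) (x : X) : `|a *: x| ^+ 2 = a ^+ 2 * `|x| ^+ 2.
Proof. by rewrite normrZ exprMn real_normK // num_real. Qed.

Lemma key_u (l : R) (u us u0 : X) : u0 = (1 + l) *: us ->
  `|u - u0| ^+ 2 + l * `|u| ^+ 2 =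
  (1 + l) * `|u - us| ^+ 2 + `|us - u0| ^+ 2 + l * `|us| ^+ 2.
Proof.
move=> ->; rewrite !sq_sub !sqZ ![ip _ ((1 + l) *: _)]ipC !ipZ ipxx (ipC us u).
ring.
Qed.

Variables (alpha beta : R).
Definition Sq (w z : X * X * R) : R :=
  `|w.1.1 - z.1.1| ^+ 2 + `|w.1.2 - z.1.2| ^+ 2 + beta ^+ 2 * (w.2 - z.2) ^+ 2.

Lemma Sq_ge0 w z : 0 <= Sq w z.
Proof. by rewrite /Sq !addr_ge0 // mulr_ge0 // sqr_ge0. Qed.

Lemma wdist_le w w' z :
  (wdist beta w z <= wdist beta w' z) = (Sq w z <= Sq w' z).
Proof.
rewrite /wdist /wnorm /= (real_normK (num_real (w.2 - z.2))) (real_normK (num_real (w'.2 - z.2))).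
by rewrite ler_sqrt // Sq_ge0.
Qed.

Lemma key (l : R) (u0 v0 us vs u v : X) (g0 gs g : R) :
  u0 = (1 + l) *: us -> v0 = (1 - l) *: vs -> beta ^+ 2 * (gs - g0) = l * alpha ->
  Ctilde alpha (us, vs, gs) -> Ctilde alpha (u, v, g) ->
  Sq (u, v, g) (u0, v0, g0) = Sq (us, vs, gs) (u0, v0, g0) +
    ((1 + l) * `|u - us| ^+ 2 + (1 - l) * `|v - vs| ^+ 2 + beta ^+ 2 * (g - gs) ^+ 2).
Proof.
move=> hu hv hg; rewrite /Ctilde /= => Cs C.
have ku := @key_u l u us u0 hu.
have kv := @key_u (- l) v vs v0 (hv : v0 = (1 + - l) *: vs).
have kg : beta ^+ 2 * (g - g0) ^+ 2 - 2 * (l * alpha) * g =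
  beta ^+ 2 * (g - gs) ^+ 2 + beta ^+ 2 * (gs - g0) ^+ 2 - 2 * (l * alpha) * gs.
  rewrite -hg; ring.
have c1 : l * `|u| ^+ 2 - l * `|v| ^+ 2 = 2 * (l * alpha) * g.
  by rewrite -mulrBr C; ring.
have c2 : l * `|us| ^+ 2 - l * `|vs| ^+ 2 = 2 * (l * alpha) * gs.
  by rewrite -mulrBr Cs; ring.
rewrite /Sq /=.
lra.
Qed.

Definition Dd (l : R) (ws w : X * X * R) : R :=
  (1 + l) * `|w.1.1 - ws.1.1| ^+ 2 + (1 - l) * `|w.1.2 - ws.1.2| ^+ 2
  + beta ^+ 2 * (w.2 - ws.2) ^+ 2.

Lemma proj_char (l : R) (u0 v0 us vs : X) (g0 gs : R) :
  -1 <= l <= 1 ->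
  u0 = (1 + l) *: us -> v0 = (1 - l) *: vs -> beta ^+ 2 * (gs - g0) = l * alpha ->
  Ctilde alpha (us, vs, gs) ->
  forall w, wproj beta (Ctilde alpha) (u0, v0, g0) w <->
            Ctilde alpha w /\ Dd l (us, vs, gs) w = 0.
Proof.
move=> /andP[l1 l2] hu hv hg Cs.
have Dge0 : forall w, 0 <= Dd l (us, vs, gs) w.
  move=> w; rewrite /Dd !addr_ge0 // mulr_ge0 // ?sqr_ge0 //; lra.
have K : forall w, Ctilde alpha w -> Sq w (u0, v0, g0) =
     Sq (us, vs, gs) (u0, v0, g0) + Dd l (us, vs, gs) w.
  by move=> [[u v] g] Cw; rewrite (@key l u0 v0 us vs u v g0 gs g hu hv hg Cs Cw).
move=> w; split.
- case=> Cw hmin; split => //.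
  have := hmin _ Cs; rewrite wdist_le (K _ Cw).
  have := Dge0 w; lra.
- case=> Cw D0; split => // w' Cw'.
  rewrite wdist_le (K _ Cw) (K _ Cw') D0.
  have := Dge0 w'; lra.
Qed.

Lemma sq_eq0 (x : X) : `|x| ^+ 2 = 0 -> x = 0.
Proof. by move/eqP; rewrite sqrf_eq0 normr_eq0 => /eqP. Qed.

Lemma proj_int (l : R) (u0 v0 us vs : X) (g0 gs : R) :
  0 < beta -> -1 < l < 1 ->
  u0 = (1 + l) *: us -> v0 = (1 - l) *: vs -> beta ^+ 2 * (gs - g0) = l * alpha ->
  Ctilde alpha (us, vs, gs) ->
  wproj beta (Ctilde alpha) (u0, v0, g0) = [set (us, vs, gs)].
Proof.
move=> hb /andP[l1 l2] hu hv hg Cs.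
have PC := fun h => @proj_char l u0 v0 us vs g0 gs h hu hv hg Cs.
have hl : -1 <= l <= 1 by apply/andP; split; lra.
have PC' := PC hl.
apply/seteqP; split => [[[u v] g]|w] /=.
- move/PC' => [_]; rewrite /Dd /= => D0.
  have a1 : 0 <= `|u - us| ^+ 2 by exact: sqr_ge0.
  have a2 : 0 <= `|v - vs| ^+ 2 by exact: sqr_ge0.
  have a3 : 0 <= (g - gs) ^+ 2 by exact: sqr_ge0.
  have b2 : 0 < beta ^+ 2 by exact: exprn_gt0.
  have p1 : 0 <= (1 + l) * `|u - us| ^+ 2 by apply: mulr_ge0 => //; lra.
  have p2 : 0 <= (1 - l) * `|v - vs| ^+ 2 by apply: mulr_ge0 => //; lra.
  have p3 : 0 <= beta ^+ 2 * (g - gs) ^+ 2 by apply: mulr_ge0 => //; lra.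
  have e1 : `|u - us| ^+ 2 = 0.
    have : (1 + l) * `|u - us| ^+ 2 = 0 by lra.
    by move/eqP; rewrite mulf_eq0 => /orP[/eqP h|/eqP //]; lra.
  have e2 : `|v - vs| ^+ 2 = 0.
    have : (1 - l) * `|v - vs| ^+ 2 = 0 by lra.
    by move/eqP; rewrite mulf_eq0 => /orP[/eqP h|/eqP //]; lra.
  have e3 : (g - gs) ^+ 2 = 0.
    have : beta ^+ 2 * (g - gs) ^+ 2 = 0 by lra.
    by move/eqP; rewrite mulf_eq0 => /orP[/eqP h|/eqP //]; lra.
  move/sq_eq0/eqP: e1; rewrite subr_eq0 => /eqP ->.
  move/sq_eq0/eqP: e2; rewrite subr_eq0 => /eqP ->.
  by move/eqP: e3; rewrite sqrf_eq0 subr_eq0 => /eqP ->.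
- move=> ->; apply/PC'; split => //; rewrite /Dd /= !subrr normr0 expr0n /=; lra.
Qed.

Lemma half_sq (x : X) : `|2^-1 *: x| ^+ 2 = `|x| ^+ 2 / 4.
Proof. rewrite sqZ; have -> : (4 : R) = 2 ^+ 2 by rewrite expr2; lra. by rewrite exprVn mulrC. Qed.

Lemma exists_norm (r : R) : (exists x : X, x != 0) -> 0 <= r ->
  exists u : X, `|u| = r.
Proof.
move=> [x hx] r0; exists ((r / `|x|) *: x).
rewrite normrZ normrM ger0_norm // normfV normr_id mulfVK //.
by rewrite normr_eq0.
Qed.

Lemma sq_zero3 (a b c x y z : R) : 0 <= a -> 0 < b -> 0 < c -> 0 <= x -> 0 <= y -> 0 <= z ->
  a * x + b * y + c * z = 0 -> y = 0 /\ z = 0.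
Proof.
move=> a0 b0 c0 x0 y0 z0 h.
have p1 : 0 <= a * x by exact: mulr_ge0.
have p2 : 0 <= b * y by apply: mulr_ge0 => //; lra.
have p3 : 0 <= c * z by apply: mulr_ge0 => //; lra.
split.
- have : b * y = 0 by lra.
  by move/eqP; rewrite mulf_eq0 => /orP[/eqP h'|/eqP //]; lra.
- have : c * z = 0 by lra.
  by move/eqP; rewrite mulf_eq0 => /orP[/eqP h'|/eqP //]; lra.
Qed.

Lemma proj_left (v0 : X) (g0 : R) : (exists x : X, x != 0) -> 0 < beta ->
  0 <= 2 * alpha * (g0 - alpha / beta ^+ 2) + `|v0| ^+ 2 / 4 ->
  let r := 2 * alpha * (g0 - alpha / beta ^+ 2) + `|v0| ^+ 2 / 4 in
  wproj beta (Ctilde alpha) (0, v0, g0) =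
    [set w | exists u : X, `|u| = Num.sqrt r /\ w = (u, 2^-1 *: v0, g0 - alpha / beta ^+ 2)]
  /\ (is_singleton (wproj beta (Ctilde alpha) (0, v0, g0)) <-> r = 0).
Proof.
move=> hX hb r0 r.
set gs := g0 - alpha / beta ^+ 2.
have b2 : 0 < beta ^+ 2 by exact: exprn_gt0.
have Cu : forall u : X, `|u| = Num.sqrt r -> Ctilde alpha (u, 2^-1 *: v0, gs).
  move=> u hu; rewrite /Ctilde /= hu sqr_sqrtr // half_sq /r /gs; lra.
have [u1 hu1] := @exists_norm _ hX (sqrtr_ge0 r).
have hv : v0 = (1 - -1) *: (2^-1 *: v0).
  by rewrite scalerA opprK (_ : (1 + 1) * 2^-1 = 1 :> R) ?scale1r //; field.
have hg : beta ^+ 2 * (gs - g0) = -1 * alpha.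
  rewrite /gs; field; lra.
have hu : (0 : X) = (1 + -1) *: u1 by rewrite subrr scale0r.
have hl : -1 <= (-1 : R) <= 1 by apply/andP; split; lra.
have PC := @proj_char (-1) 0 v0 u1 (2^-1 *: v0) g0 gs hl hu hv hg (Cu _ hu1).
have E : wproj beta (Ctilde alpha) (0, v0, g0) =
    [set w | exists u : X, `|u| = Num.sqrt r /\ w = (u, 2^-1 *: v0, gs)].
  apply/seteqP; split => [[[u v] g]|w] /=.
  - move/PC => [Cw]; rewrite /Dd /= => D0.
    have z1 : 0 <= (1 - 1 : R) by lra.
    have z2 : 0 < (1 - -1 : R) by lra.
    have [e2 e3] := @sq_zero3 _ _ _ _ _ _ z1 z2 b2 (sqr_ge0 _) (sqr_ge0 _) (sqr_ge0 _) D0.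
    move/sq_eq0/eqP: e2; rewrite subr_eq0 => /eqP ev.
    move/eqP: e3; rewrite sqrf_eq0 subr_eq0 => /eqP eg.
    exists u; split; last by rewrite ev eg.
    move: Cw; rewrite /Ctilde /= ev eg half_sq => Cw.
    have : `|u| ^+ 2 = r by rewrite /r -/gs; lra.
    by move=> <-; rewrite sqrtr_sqr normr_id.
  - move=> [u [hu' ->]]; apply/PC; split; first exact: Cu.
    by rewrite /Dd /= !subrr normr0 expr0n /= !mulr0 !addr0 mul0r.
split; first by rewrite E.
rewrite E; split.
- move=> [a ha].
  have i1 : [set w | exists u : X, `|u| = Num.sqrt r /\ w = (u, 2^-1 *: v0, gs)] (u1, 2^-1 *: v0, gs) by exists u1.
  have i2 : [set w | exists u : X, `|u| = Num.sqrt r /\ w = (u, 2^-1 *: v0, gs)] (- u1, 2^-1 *: v0, gs).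
    by exists (- u1); rewrite normrN.
  rewrite ha /= in i1 i2.
  have e : u1 = - u1.
    have : (u1, 2^-1 *: v0, gs) = (- u1, 2^-1 *: v0, gs) by rewrite i1 i2.
    by case.
  have : u1 = 0.
    have h2 : u1 + u1 = 0 by rewrite {2}e subrr.
    by move/eqP: h2; rewrite -mulr2n -scaler_nat scaler_eq0 pnatr_eq0 /= => /eqP.
  move=> h0; move: hu1; rewrite h0 normr0 => /esym/eqP; rewrite sqrtr_eq0 => h.
  apply/eqP; rewrite eq_le h /=; exact: r0.
- move=> r00; exists (0, 2^-1 *: v0, gs); apply/seteqP; split => [w|w] /=.
  + move=> [u [hu' ->]]; move: hu'; rewrite r00 sqrtr0 => /eqP; rewrite normr_eq0 => /eqP ->.
    by [].
  + move=> ->; exists 0; by rewrite normr0 r00 sqrtr0.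
Qed.

Lemma proj_right (u0 : X) (g0 : R) : (exists x : X, x != 0) -> 0 < beta ->
  0 <= - (2 * alpha * (g0 + alpha / beta ^+ 2)) + `|u0| ^+ 2 / 4 ->
  let r := - (2 * alpha * (g0 + alpha / beta ^+ 2)) + `|u0| ^+ 2 / 4 in
  wproj beta (Ctilde alpha) (u0, 0, g0) =
    [set w | exists v : X, `|v| = Num.sqrt r /\ w = (2^-1 *: u0, v, g0 + alpha / beta ^+ 2)]
  /\ (is_singleton (wproj beta (Ctilde alpha) (u0, 0, g0)) <-> r = 0).
Proof.
move=> hX hb r0 r.
set gs := g0 + alpha / beta ^+ 2.
have b2 : 0 < beta ^+ 2 by exact: exprn_gt0.
have Cu : forall v : X, `|v| = Num.sqrt r -> Ctilde alpha (2^-1 *: u0, v, gs).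
  move=> v hv; rewrite /Ctilde /= hv sqr_sqrtr // half_sq /r /gs; lra.
have [v1 hv1] := @exists_norm _ hX (sqrtr_ge0 r).
have hu : u0 = (1 + 1) *: (2^-1 *: u0).
  by rewrite scalerA (_ : (1 + 1) * 2^-1 = 1 :> R) ?scale1r //; field.
have hg : beta ^+ 2 * (gs - g0) = 1 * alpha.
  rewrite /gs; field; lra.
have hv : (0 : X) = (1 - 1) *: v1 by rewrite subrr scale0r.
have hl : -1 <= (1 : R) <= 1 by apply/andP; split; lra.
have PC := @proj_char 1 u0 0 (2^-1 *: u0) v1 g0 gs hl hu hv hg (Cu _ hv1).
have E : wproj beta (Ctilde alpha) (u0, 0, g0) =
    [set w | exists v : X, `|v| = Num.sqrt r /\ w = (2^-1 *: u0, v, gs)].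
  apply/seteqP; split => [[[u v] g]|w] /=.
  - move/PC => [Cw]; rewrite /Dd /= => D0.
    have z1 : 0 <= (1 - 1 : R) by lra.
    have z2 : 0 < (1 + 1 : R) by lra.
    have D0' : (1 - 1) * `|v - v1| ^+ 2 + (1 + 1) * `|u - 2^-1 *: u0| ^+ 2 +
        beta ^+ 2 * (g - gs) ^+ 2 = 0 by lra.
    have [e2 e3] := @sq_zero3 _ _ _ _ _ _ z1 z2 b2 (sqr_ge0 _) (sqr_ge0 _) (sqr_ge0 _) D0'.
    move/sq_eq0/eqP: e2; rewrite subr_eq0 => /eqP eu.
    move/eqP: e3; rewrite sqrf_eq0 subr_eq0 => /eqP eg.
    exists v; split; last by rewrite eu eg.
    move: Cw; rewrite /Ctilde /= eu eg half_sq => Cw.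
    have : `|v| ^+ 2 = r by rewrite /r -/gs; lra.
    by move=> <-; rewrite sqrtr_sqr normr_id.
  - move=> [v [hv' ->]]; apply/PC; split; first exact: Cu.
    by rewrite /Dd /= !subrr normr0 expr0n /= !mulr0 !addr0 mul0r add0r.
split; first by rewrite E.
rewrite E; split.
- move=> [a ha].
  have i1 : [set w | exists v : X, `|v| = Num.sqrt r /\ w = (2^-1 *: u0, v, gs)] (2^-1 *: u0, v1, gs) by exists v1.
  have i2 : [set w | exists v : X, `|v| = Num.sqrt r /\ w = (2^-1 *: u0, v, gs)] (2^-1 *: u0, - v1, gs).
    by exists (- v1); rewrite normrN.
  rewrite ha /= in i1 i2.
  have e : v1 = - v1.
    have : (2^-1 *: u0, v1, gs) = (2^-1 *: u0, - v1, gs) by rewrite i1 i2.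
    by case.
  have : v1 = 0.
    have h2 : v1 + v1 = 0 by rewrite {2}e subrr.
    by move/eqP: h2; rewrite -mulr2n -scaler_nat scaler_eq0 pnatr_eq0 /= => /eqP.
  move=> h0; move: hv1; rewrite h0 normr0 => /esym/eqP; rewrite sqrtr_eq0 => h.
  apply/eqP; rewrite eq_le h /=; exact: r0.
- move=> r00; exists (2^-1 *: u0, 0, gs); apply/seteqP; split => [w|w] /=.
  + move=> [v [hv' ->]]; move: hv'; rewrite r00 sqrtr0 => /eqP; rewrite normr_eq0 => /eqP ->.
    by [].
  + move=> ->; exists 0; by rewrite normr0 r00 sqrtr0.
Qed.

Lemma proj_zero (g0 : R) : alpha != 0 -> 0 < beta ->
  `|alpha * g0| <= alpha ^+ 2 / beta ^+ 2 ->
  wproj beta (Ctilde (X:=X) alpha) (0, 0, g0) = [set (0, 0, 0)].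
Proof.
move=> ha hb hag.
have b2 : 0 < beta ^+ 2 by exact: exprn_gt0.
have a2 : 0 < alpha ^+ 2 by rewrite exprn_even_gt0.
set l := - (beta ^+ 2 * g0 / alpha).
have hl' : l = - (beta ^+ 2 / alpha ^+ 2) * (alpha * g0) by rewrite /l; field.
move: hag; rewrite ler_norml => /andP[t1 t2].
have k0 : 0 < beta ^+ 2 / alpha ^+ 2 by exact: divr_gt0.
have e1 : (beta ^+ 2 / alpha ^+ 2) * (alpha ^+ 2 / beta ^+ 2) = 1.
  by field; apply/andP; split; rewrite ?expf_neq0 // gt_eqF.
have s1 : (beta ^+ 2 / alpha ^+ 2) * (alpha * g0) <= 1.
  by rewrite -e1 ler_pM2l.
have s2 : - 1 <= (beta ^+ 2 / alpha ^+ 2) * (alpha * g0).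
  by rewrite -e1 -mulrN ler_pM2l.
have hl : -1 <= l <= 1 by apply/andP; rewrite hl' mulNr; split; lra.
have hu : (0 : X) = (1 + l) *: 0 by rewrite scaler0.
have hv : (0 : X) = (1 - l) *: 0 by rewrite scaler0.
have hg : beta ^+ 2 * (0 - g0) = l * alpha by rewrite /l; field.
have Cs : Ctilde alpha ((0 : X), (0 : X), 0) by rewrite /Ctilde /= normr0 expr0n /=; lra.
have PC := @proj_char l 0 0 0 0 g0 0 hl hu hv hg Cs.
move: hl => /andP[l1 l2].
apply/seteqP; split => [[[u v] g]|w] /=.
- move/PC => [Cw]; rewrite /Dd /= !subr0 => D0.
  move: Cw; rewrite /Ctilde /= => Cw.
  have p1 : 0 <= (1 + l) * `|u| ^+ 2 by apply: mulr_ge0; [lra|exact: sqr_ge0].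
  have p2 : 0 <= (1 - l) * `|v| ^+ 2 by apply: mulr_ge0; [lra|exact: sqr_ge0].
  have p3 : 0 <= beta ^+ 2 * g ^+ 2 by apply: mulr_ge0; [lra|exact: sqr_ge0].
  have q3 : beta ^+ 2 * g ^+ 2 = 0 by lra.
  have eg : g = 0.
    by move/eqP: q3; rewrite mulf_eq0 !sqrf_eq0 (gt_eqF hb) /= => /eqP.
  rewrite eg mulr0 in Cw.
  have ev : `|v| ^+ 2 = `|u| ^+ 2 by lra.
  rewrite ev in p2 D0.
  have eu : `|u| ^+ 2 = 0 by lra.
  by rewrite (@sq_eq0 u eu) (@sq_eq0 v (etrans ev eu)) eg.
- move=> ->; apply/PC; split => //.
  by rewrite /Dd /= !subrr normr0 expr0n /= !mulr0 !addr0.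
Qed.
End Aux.
Lemma ivt_poly (R : realType) (p : {poly R}) : 0 < p.[-1] -> p.[1] < 0 ->
  exists c : R, -1 < c < 1 /\ p.[c] = 0.
Proof.
move=> h1 h2.
have hab : (-1 : R) <= 1 by lra.
have hv : Num.min p.[-1] p.[1] <= 0 <= Num.max p.[-1] p.[1].
  apply/andP; split.
  + rewrite ge_min; apply/orP; right; lra.
  + rewrite le_max; apply/orP; left; lra.
have [c cin pc] := @IVT R (horner p) (-1) 1 0 hab (continuous_subspaceT (@continuous_horner R p)) hv.
- exists c; split => //.
  move: cin; rewrite in_itv /= => /andP[c1 c2].
  apply/andP; split; rewrite lt_neqAle ?c1 ?c2 andbT.
  + by apply/eqP => e; move: h1; rewrite e pc ltxx.
  + by apply/eqP => e; move: h2; rewrite -e pc ltxx.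
Qed.

Lemma ex_g (R : realType) (alpha beta gamma0 A B : R) : beta != 0 -> 0 < A -> 0 < B ->
  exists l, -1 < l < 1 /\ gfun alpha beta gamma0 (A - B) (A + B) l = 0.
Proof.
move=> hb hA hB.
set k := alpha ^+ 2 / beta ^+ 2.
set P : {poly R} := A *: (1 - 'X) ^+ 2 - B *: (1 + 'X) ^+ 2
   - ((2 * k) *: 'X + (2 * alpha * gamma0)%:P) * (1 - 'X ^+ 2) ^+ 2.
have PE : forall x, P.[x] = A * (1 - x) ^+ 2 - B * (1 + x) ^+ 2
   - (2 * k * x + 2 * alpha * gamma0) * (1 - x ^+ 2) ^+ 2.
  by move=> x; rewrite /P !hornerE.
have [c [/andP[c1 c2] pc]] : exists c : R, -1 < c < 1 /\ P.[c] = 0.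
  apply: ivt_poly; rewrite PE; lra.
exists c; split; first by apply/andP.
rewrite PE in pc.
rewrite /gfun -/k.
have h1 : 1 - c ^+ 2 != 0 by apply/eqP; nra.
have -> : ((c ^+ 2 + 1) * (A - B) - 2 * c * (A + B)) / (1 - c ^+ 2) ^+ 2 =
   (A * (1 - c) ^+ 2 - B * (1 + c) ^+ 2) / (1 - c ^+ 2) ^+ 2 by congr (_ / _); ring.
have -> : A * (1 - c) ^+ 2 - B * (1 + c) ^+ 2 = (2 * k * c + 2 * alpha * gamma0) * (1 - c ^+ 2) ^+ 2 by lra.
rewrite /k; field; rewrite hb /=.
by [].
Qed.

Lemma ex_g1 (R : realType) (alpha beta gamma0 B : R) : beta != 0 -> 0 < B ->
  alpha * (gamma0 - alpha / beta ^+ 2) < - (B / 8) ->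
  exists l, -1 < l < 1 /\ g1fun alpha beta gamma0 B l = 0.
Proof.
move=> hb hB hc.
set k := alpha ^+ 2 / beta ^+ 2.
have ek : alpha * (gamma0 - alpha / beta ^+ 2) = alpha * gamma0 - k by rewrite /k; field.
set P : {poly R} := - (B%:P + ((2 * k) *: 'X + (2 * alpha * gamma0)%:P) * (1 - 'X) ^+ 2).
have PE : forall x, P.[x] = - (B + (2 * k * x + 2 * alpha * gamma0) * (1 - x) ^+ 2).
  by move=> x; rewrite /P !hornerE.
have [c [/andP[c1 c2] pc]] : exists c : R, -1 < c < 1 /\ P.[c] = 0.
  apply: ivt_poly; rewrite PE; lra.
exists c; split; first by apply/andP.
rewrite PE in pc.
rewrite /g1fun -/k.
have h1 : 1 - c != 0 by apply/eqP; lra.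
have -> : B = - ((2 * k * c + 2 * alpha * gamma0) * (1 - c) ^+ 2) by lra.
rewrite /k; field; rewrite hb /=.
by [].
Qed.

Lemma ex_g2 (R : realType) (alpha beta gamma0 A : R) : beta != 0 -> 0 < A ->
  alpha * (gamma0 + alpha / beta ^+ 2) > A / 8 ->
  exists l, -1 < l < 1 /\ g2fun alpha beta gamma0 A l = 0.
Proof.
move=> hb hA hc.
set k := alpha ^+ 2 / beta ^+ 2.
have ek : alpha * (gamma0 + alpha / beta ^+ 2) = alpha * gamma0 + k by rewrite /k; field.
set P : {poly R} := A%:P - ((2 * k) *: 'X + (2 * alpha * gamma0)%:P) * (1 + 'X) ^+ 2.
have PE : forall x, P.[x] = A - (2 * k * x + 2 * alpha * gamma0) * (1 + x) ^+ 2.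
  by move=> x; rewrite /P !hornerE.
have [c [/andP[c1 c2] pc]] : exists c : R, -1 < c < 1 /\ P.[c] = 0.
  apply: ivt_poly; rewrite PE; lra.
exists c; split; first by apply/andP.
rewrite PE in pc.
rewrite /g2fun -/k.
have h1 : 1 + c != 0 by apply/eqP; lra.
have -> : A = (2 * k * c + 2 * alpha * gamma0) * (1 + c) ^+ 2 by lra.
rewrite /k; field; rewrite hb /=.
by [].
Qed.


Lemma set1_inj (T : Type) (a b : T) : [set a] = [set b] -> a = b.
Proof. by move=> e; have : [set b] a by rewrite -e. Qed.

Lemma l_inj (R : realType) (alpha beta g0 l l' : R) : alpha != 0 -> beta != 0 ->
  g0 + l * alpha / beta ^+ 2 = g0 + l' * alpha / beta ^+ 2 -> l = l'.
Proof.
move=> ha hb e.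
have : (l - l') * (alpha / beta ^+ 2) = 0.
  have -> : (l - l') * (alpha / beta ^+ 2) =
    (g0 + l * alpha / beta ^+ 2) - (g0 + l' * alpha / beta ^+ 2) by ring.
  by rewrite e subrr.
move/eqP; rewrite mulf_eq0 => /orP[|].
- by rewrite subr_eq0 => /eqP.
- by rewrite mulf_eq0 invr_eq0 expf_eq0 /= (negbTE ha) (negbTE hb).
Qed.

Theorem mainTheorem1 (R : realType) (X : completeNormedModType R)
  (ip : X -> X -> R) (hip : is_inner_product ip)
  (hX : exists x : X, x != 0)
  (alpha beta : R) (halpha : alpha != 0) (hbeta : 0 < beta)
  (u0 v0 : X) (gamma0 : R) :
  let P := wproj beta (Ctilde (X:=X) alpha) in
  (* (i) *)
  (u0 != 0 -> v0 != 0 ->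
    let p := `|u0| ^+ 2 - `|v0| ^+ 2 in
    let q := `|u0| ^+ 2 + `|v0| ^+ 2 in
    (exists! l : R, -1 < l < 1 /\ gfun alpha beta gamma0 p q l = 0) /\
    (forall l : R, -1 < l < 1 -> gfun alpha beta gamma0 p q l = 0 ->
       P (u0, v0, gamma0) =
       [set ((1 + l)^-1 *: u0, (1 - l)^-1 *: v0, gamma0 + l * alpha / beta ^+ 2)]))
  /\
  (* (ii) *)
  (v0 != 0 ->
    (alpha * (gamma0 - alpha / beta ^+ 2) < - (`|v0| ^+ 2 / 8) ->
      (exists! l : R, -1 < l < 1 /\ g1fun alpha beta gamma0 (`|v0| ^+ 2) l = 0) /\
      (forall l : R, -1 < l < 1 -> g1fun alpha beta gamma0 (`|v0| ^+ 2) l = 0 ->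
         P (0, v0, gamma0) =
         [set (0, (1 - l)^-1 *: v0, gamma0 + l * alpha / beta ^+ 2)]))
    /\
    (alpha * (gamma0 - alpha / beta ^+ 2) >= - (`|v0| ^+ 2 / 8) ->
      P (0, v0, gamma0) =
        [set w | exists u : X,
           `|u| = Num.sqrt (2 * alpha * (gamma0 - alpha / beta ^+ 2) + `|v0| ^+ 2 / 4)
           /\ w = (u, 2^-1 *: v0, gamma0 - alpha / beta ^+ 2)]
      /\ (is_singleton (P (0, v0, gamma0)) <->
          alpha * (gamma0 - alpha / beta ^+ 2) = - (`|v0| ^+ 2 / 8))))
  /\
  (* (iii) *)
  (u0 != 0 ->
    (alpha * (gamma0 + alpha / beta ^+ 2) > `|u0| ^+ 2 / 8 ->
      (exists! l : R, -1 < l < 1 /\ g2fun alpha beta gamma0 (`|u0| ^+ 2) l = 0) /\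
      (forall l : R, -1 < l < 1 -> g2fun alpha beta gamma0 (`|u0| ^+ 2) l = 0 ->
         P (u0, 0, gamma0) =
         [set ((1 + l)^-1 *: u0, 0, gamma0 + l * alpha / beta ^+ 2)]))
    /\
    (alpha * (gamma0 + alpha / beta ^+ 2) <= `|u0| ^+ 2 / 8 ->
      P (u0, 0, gamma0) =
        [set w | exists v : X,
           `|v| = Num.sqrt (- (2 * alpha * (gamma0 + alpha / beta ^+ 2)) + `|u0| ^+ 2 / 4)
           /\ w = (2^-1 *: u0, v, gamma0 + alpha / beta ^+ 2)]
      /\ (is_singleton (P (u0, 0, gamma0)) <->
          alpha * (gamma0 + alpha / beta ^+ 2) = `|u0| ^+ 2 / 8)))
  /\
  (* (iv) *)
  ((alpha * gamma0 > alpha ^+ 2 / beta ^+ 2 ->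
      P (0, 0, gamma0) =
        [set w | exists u : X,
           `|u| = Num.sqrt (2 * alpha * (gamma0 - alpha / beta ^+ 2))
           /\ w = (u, 0, gamma0 - alpha / beta ^+ 2)]
      /\ ~ is_singleton (P (0, 0, gamma0)))
   /\
   (`|alpha * gamma0| <= alpha ^+ 2 / beta ^+ 2 ->
      P (0, 0, gamma0) = [set (0, 0, 0)])
   /\
   (alpha * gamma0 < - (alpha ^+ 2 / beta ^+ 2) ->
      P (0, 0, gamma0) =
        [set w | exists v : X,
           `|v| = Num.sqrt (- (2 * alpha * (gamma0 + alpha / beta ^+ 2)))
           /\ w = (0, v, gamma0 + alpha / beta ^+ 2)]
      /\ ~ is_singleton (P (0, 0, gamma0)))).
Proof.
move=> P.
have hb0 : beta != 0 by rewrite gt_eqF.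
have b2 : 0 < beta ^+ 2 by exact: exprn_gt0.
have hsc : forall (l : R) (x : X), 1 + l != 0 -> x = (1 + l) *: ((1 + l)^-1 *: x).
  by move=> l x h; rewrite scalerA mulfV // scale1r.
have hsc' : forall (l : R) (x : X), 1 - l != 0 -> x = (1 - l) *: ((1 - l)^-1 *: x).
  by move=> l x h; rewrite scalerA mulfV // scale1r.
have hgs : forall l, beta ^+ 2 * (gamma0 + l * alpha / beta ^+ 2 - gamma0) = l * alpha.
  by move=> l; field.
have e0 : `|0 : X| ^+ 2 = 0 by rewrite normr0 expr2 mul0r.
split; [|split; [|split]].
-
  move=> hu0 hv0 p q.
  have A0 : 0 < `|u0| ^+ 2 by rewrite exprn_gt0 // normr_gt0.
  have B0 : 0 < `|v0| ^+ 2 by rewrite exprn_gt0 // normr_gt0.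
  have Pl : forall l : R, -1 < l < 1 -> gfun alpha beta gamma0 p q l = 0 ->
       P (u0, v0, gamma0) =
       [set ((1 + l)^-1 *: u0, (1 - l)^-1 *: v0, gamma0 + l * alpha / beta ^+ 2)].
    move=> l hl hg; move: (hl) => /andP[l1 l2]; rewrite /P.
    have n1 : 1 + l != 0 by apply/eqP; lra.
    have n2 : 1 - l != 0 by apply/eqP; lra.
    apply: (@proj_int _ _ _ hip _ _ _ _ _ _ _ _ _ hbeta hl (hsc l u0 n1) (hsc' l v0 n2) (hgs l)).
    rewrite /Ctilde /= !sqZ.
    move: hg; rewrite /gfun /p /q => hg.
    have E : (1 + l)^-1 ^+ 2 * `|u0| ^+ 2 - (1 - l)^-1 ^+ 2 * `|v0| ^+ 2 =
       ((l ^+ 2 + 1) * (`|u0| ^+ 2 - `|v0| ^+ 2) - 2 * l * (`|u0| ^+ 2 + `|v0| ^+ 2))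
         / (1 - l ^+ 2) ^+ 2.
      by field; rewrite n1 n2 /= andbT; apply: lt0r_neq0; nra.
    have F : 2 * alpha * (gamma0 + l * alpha / beta ^+ 2) =
       2 * l * alpha ^+ 2 / beta ^+ 2 + 2 * alpha * gamma0 by ring.
    rewrite E F; lra.
  split => //.
  have [l0 [hl0 hg0]] := @ex_g _ alpha beta gamma0 _ _ hb0 A0 B0.
  exists l0; split => // l' [hl' hg'].
  have := @set1_inj _ _ _ (etrans (esym (Pl _ hl0 hg0)) (Pl _ hl' hg')); case => _ _.
  by move/(@l_inj _ alpha beta gamma0 _ _ halpha hb0).
-
  move=> hv0; split.
  + move=> hc.
    have B0 : 0 < `|v0| ^+ 2 by rewrite exprn_gt0 // normr_gt0.
    have Pl : forall l : R, -1 < l < 1 -> g1fun alpha beta gamma0 (`|v0| ^+ 2) l = 0 ->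
         P (0, v0, gamma0) =
         [set (0, (1 - l)^-1 *: v0, gamma0 + l * alpha / beta ^+ 2)].
      move=> l hl hg; move: (hl) => /andP[l1 l2]; rewrite /P. rewrite /P.
      have n2 : 1 - l != 0 by apply/eqP; lra.
      have hu : (0 : X) = (1 + l) *: 0 by rewrite scaler0.
      apply: (@proj_int _ _ _ hip _ _ _ _ _ _ _ _ _ hbeta hl hu (hsc' l v0 n2) (hgs l)).
      rewrite /Ctilde /= !sqZ e0.
      move: hg; rewrite /g1fun => hg.
      have E : (1 - l)^-1 ^+ 2 * `|v0| ^+ 2 = `|v0| ^+ 2 / (1 - l) ^+ 2.
        by field.
      have F : 2 * alpha * (gamma0 + l * alpha / beta ^+ 2) =
         2 * l * alpha ^+ 2 / beta ^+ 2 + 2 * alpha * gamma0 by ring.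
      rewrite E F; lra.
    split => //.
    have [l0 [hl0 hg0]] := @ex_g1 _ alpha beta gamma0 _ hb0 B0 hc.
    exists l0; split => // l' [hl' hg'].
    have := @set1_inj _ _ _ (etrans (esym (Pl _ hl0 hg0)) (Pl _ hl' hg')); case => _.
    by move/(@l_inj _ alpha beta gamma0 _ _ halpha hb0).
  + move=> hc.
    have r0 : 0 <= 2 * alpha * (gamma0 - alpha / beta ^+ 2) + `|v0| ^+ 2 / 4 by lra.
    have [E S] := @proj_left _ _ _ hip _ _ _ _ hX hbeta r0.
    split; first exact: E.
    rewrite /P S; split; lra.
-
  move=> hu0; split.
  + move=> hc.
    have A0 : 0 < `|u0| ^+ 2 by rewrite exprn_gt0 // normr_gt0.
    have Pl : forall l : R, -1 < l < 1 -> g2fun alpha beta gamma0 (`|u0| ^+ 2) l = 0 ->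
         P (u0, 0, gamma0) =
         [set ((1 + l)^-1 *: u0, 0, gamma0 + l * alpha / beta ^+ 2)].
      move=> l hl hg; move: (hl) => /andP[l1 l2]; rewrite /P. rewrite /P.
      have n1 : 1 + l != 0 by apply/eqP; lra.
      have hv : (0 : X) = (1 - l) *: 0 by rewrite scaler0.
      apply: (@proj_int _ _ _ hip _ _ _ _ _ _ _ _ _ hbeta hl (hsc l u0 n1) hv (hgs l)).
      rewrite /Ctilde /= !sqZ e0.
      move: hg; rewrite /g2fun => hg.
      have E : (1 + l)^-1 ^+ 2 * `|u0| ^+ 2 = `|u0| ^+ 2 / (1 + l) ^+ 2.
        by field.
      have F : 2 * alpha * (gamma0 + l * alpha / beta ^+ 2) =
         2 * l * alpha ^+ 2 / beta ^+ 2 + 2 * alpha * gamma0 by ring.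
      rewrite E F; lra.
    split => //.
    have [l0 [hl0 hg0]] := @ex_g2 _ alpha beta gamma0 _ hb0 A0 hc.
    exists l0; split => // l' [hl' hg'].
    have := @set1_inj _ _ _ (etrans (esym (Pl _ hl0 hg0)) (Pl _ hl' hg')); case => _.
    by move/(@l_inj _ alpha beta gamma0 _ _ halpha hb0).
  + move=> hc.
    have r0 : 0 <= - (2 * alpha * (gamma0 + alpha / beta ^+ 2)) + `|u0| ^+ 2 / 4 by lra.
    have [E S] := @proj_right _ _ _ hip _ _ _ _ hX hbeta r0.
    split; first exact: E.
    rewrite /P S; split; lra.
-
  have k : alpha ^+ 2 / beta ^+ 2 = alpha * (alpha / beta ^+ 2) by ring.
  split; [|split].
  + move=> hc.
    have r0 : 0 <= 2 * alpha * (gamma0 - alpha / beta ^+ 2) + `|0 : X| ^+ 2 / 4.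
      rewrite e0 mul0r addr0; lra.
    have [E S] := @proj_left _ _ _ hip _ _ _ _ hX hbeta r0.
    rewrite e0 mul0r addr0 scaler0 in E S.
    split; first exact: E.
    rewrite /P S; lra.
  + move=> hc; exact: (@proj_zero _ _ _ hip _ _ _ halpha hbeta hc).
  + move=> hc.
    have r0 : 0 <= - (2 * alpha * (gamma0 + alpha / beta ^+ 2)) + `|0 : X| ^+ 2 / 4.
      rewrite e0 mul0r addr0; lra.
    have [E S] := @proj_right _ _ _ hip _ _ _ _ hX hbeta r0.
    rewrite e0 mul0r addr0 scaler0 in E S.
    split; first exact: E.
    rewrite /P S; lra.
Qed.
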